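(* Let $R$ be a finite commutative local Frobenius ring with residue field $\mathbb{F}_q$. For $i=1,2$, let $C_i$ be a linear code of length $n$ over $R$ with generator matrix $\mathrm{G}_i$ and parity check matrix $\mathrm{H}_i$. Then $\dim(C_1\cap C_2)=\dim(C_1)-\texttt{Rank}_q(\mathrm{H}_2\mathrm{G}_1^\top)$ or $\dim(C_1\cap C_2)=\dim(C_2)-\texttt{Rank}_q(\mathrm{H}_1\mathrm{G}_2^\top)$.
   Context: A linear code of length $n$ over $R$ is an $R$-submodule of $R^n$; $\dim(C):=\log_q|C|$. A generator matrix of $C$ is a matrix whose rows generate $C$; a parity check matrix of $C$ is a generator matrix of $C^\perp=\{\mathbf{u}\in R^n:\sum_j u_jc_j=0\ \forall \mathbf{c}\in C\}$. For a matrix $\mathrm{A}$ over $R$, $\texttt{Rank}_q(\mathrm{A}):=\log_q|M|$ where $M$ is the $R$-submodule spanned by the rows of $\mathrm{A}$. *)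

(* Defs.v *)
From HB Require Import structures.
From mathcomp Require Import all_boot all_order all_algebra.
From Stdlib Require Rdefinitions Raxioms Rfunctions Rpower.

Set Implicit Arguments.
Unset Strict Implicit.
Unset Printing Implicit Defensive.

Import GRing.Theory.
Local Open Scope ring_scope.

Section RingNotions.
Variable R : finComNzRingType.

Definition is_ideal (I : {set R}) : Prop :=
  [/\ (0 : R) \in I,
      (forall x y, x \in I -> y \in I -> x + y \in I) &
      (forall r x, x \in I -> r * x \in I)].

Definition is_maximal_ideal (M : {set R}) : Prop :=
  [/\ is_ideal M, M != [set: R] &
      forall J, is_ideal J -> M \subset J -> J = M \/ J = [set: R]].

Definition local_with_max (M : {set R}) : Prop :=
  is_maximal_ideal M /\ forall J, is_maximal_ideal J -> J = M.

Definition is_minimal_ideal (I : {set R}) : Prop :=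
  [/\ is_ideal I, I != [set 0 : R] &
      forall J, is_ideal J -> J \subset I -> J = [set 0 : R] \/ J = I].

(* The socle soc(R): the sum of all minimal ideals, i.e. the smallest ideal
   containing every minimal ideal. *)
Definition in_socle (x : R) : Prop :=
  forall J : {set R}, is_ideal J ->
    (forall I, is_minimal_ideal I -> I \subset J) -> x \in J.

(* Frobenius (local case, residue field R/M): soc(R) is isomorphic to R/M as
   an R-module.  An R-isomorphism R/M ~ soc(R) is the same as an R-linear map
   R -> soc(R), necessarily r |-> a*r, that is onto soc(R) with kernel M. *)
Definition local_frobenius (M : {set R}) : Prop :=
  exists a : R,
    (forall y, (exists r, y = a * r) <-> in_socle y) /\
    (forall r, a * r = 0 <-> r \in M).

Definition residue_card (M : {set R}) : nat := #|[set: R]| %/ #|M|.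

Variable n : nat.

Definition linear_code (C : {set 'rV[R]_n}) : Prop :=
  [/\ (0 : 'rV[R]_n) \in C,
      (forall x y, x \in C -> y \in C -> x + y \in C) &
      (forall (r : R) x, x \in C -> r *: x \in C)].

Definition rowspan (k m : nat) (A : 'M[R]_(k, m)) : {set 'rV[R]_m} :=
  [set u *m A | u : 'rV[R]_k].

Definition dual_code (C : {set 'rV[R]_n}) : {set 'rV[R]_n} :=
  [set u : 'rV[R]_n | [forall c in C, \sum_(j < n) u 0 j * c 0 j == 0]].

Definition generator_matrix (k : nat) (G : 'M[R]_(k, n)) (C : {set 'rV[R]_n}) :=
  rowspan G = C.

Definition parity_check_matrix (l : nat) (H : 'M[R]_(l, n)) (C : {set 'rV[R]_n}) :=
  rowspan H = dual_code C.
End RingNotions.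

Definition logq (q N : nat) : Rdefinitions.R :=
  Rdefinitions.Rdiv (Rpower.ln (Raxioms.INR N)) (Rpower.ln (Raxioms.INR q)).

Definition dimq (q : nat) (T : finType) (C : {set T}) : Rdefinitions.R :=
  logq q #|C|.

Definition Rankq (R : finComNzRingType) (q k m : nat) (A : 'M[R]_(k, m)) : Rdefinitions.R :=
  logq q #|rowspan A|.

(* Main.v *)
Require Import Defs.
From Stdlib Require Import Reals Lra.
Lemma real_part (q a b c : nat) : (0 < b)%nat -> (0 < c)%nat -> a = (c * b)%nat ->
  logq q b = Rminus (logq q a) (logq q c).
Proof.
intros hb hc ->. unfold logq. rewrite mult_INR, ln_mult.
- unfold Rdiv; ring.
- apply lt_0_INR; exact hc.
- apply lt_0_INR; exact hb.
Qed.
From mathcomp Require Import all_boot all_order all_algebra.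
From mathcomp Require Import all_fingroup all_field all_character.
From Stdlib Require Import Classical.
From Stdlib Require Rdefinitions Raxioms Rfunctions Rpower.
Import GRing.Theory Num.Theory.
Set Implicit Arguments.
Unset Strict Implicit.
Local Open Scope ring_scope.

Lemma exists_char (R : finZmodType) (a : R) : a != 0 ->
  exists chi : R -> algC, (forall x y, chi (x + y) = chi x * chi y) /\ chi 0 = 1 /\ chi a != 1.
Proof.
move=> a0.
have cG : abelian [set: R]%G.
  by apply/centsP => x _ y _; apply: FinRing.zmod_mulgC.
have Hn : a \notin \bigcap_i cfker 'chi[[set: R]%G]_i.
  by rewrite TI_cfker_irr inE.
have [i Hi] : exists i : Iirr [set: R]%G, a \notin cfker 'chi_i.
  case: (boolP [exists i : Iirr [set: R]%G, a \notin cfker 'chi_i]) => [/existsP // | /existsPn H].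
  by case/negP: Hn; apply/bigcapP => i _; move: (H i); rewrite negbK.
move: Hi; rewrite cfkerEirr inE => Hi.
have lin := (char_abelianP _ cG i).
exists (fun x => 'chi_i x); split; last split.
- by move=> x y; rewrite -(lin_charM lin) ?inE.
- by rewrite -(lin_char1 lin).
- by rewrite -(lin_char1 lin).
Qed.

Lemma sum_hom0 (T : finZmodType) (psi : T -> algC) (S : {set T}) c0 :
  (forall x y, psi (x + y) = psi x * psi y) ->
  (forall x y, x \in S -> y \in S -> x + y \in S) -> (forall x, x \in S -> - x \in S) ->
  c0 \in S -> psi c0 != 1 -> \sum_(c in S) psi c = 0.
Proof.
move=> hom addS oppS c0S nt.
have E : \sum_(c in S) psi c = (\sum_(c in S) psi c) * psi c0.
  rewrite {1}(reindex_inj (addIr c0)) /= mulr_suml.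
  apply: eq_big; last by move=> c _; rewrite hom.
  move=> c.
  apply/idP/idP => h; last by apply: addS.
  by have := addS _ _ h (oppS _ c0S); rewrite addrK.
have : (\sum_(c in S) psi c) * (1 - psi c0) = 0 by rewrite mulrBr mulr1 -E subrr.
by move/eqP; rewrite mulf_eq0 subr_eq0 [1 == _]eq_sym (negbTE nt) orbF => /eqP.
Qed.

Lemma sum_hom0T (T : finZmodType) (psi : T -> algC) c0 :
  (forall x y, psi (x + y) = psi x * psi y) -> psi c0 != 1 -> \sum_c psi c = 0.
Proof.
move=> hom nt; transitivity (\sum_(c in [set: T]) psi c).
  by apply: eq_bigl => c; rewrite inE.
by apply: (@sum_hom0 _ psi setT c0 hom) => *; rewrite ?inE.
Qed.

Section Ring.
Variable R : finComNzRingType.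

Definition dot {n} (u c : 'rV[R]_n) := \sum_j u 0 j * c 0 j.

Lemma dotDl n (u v c : 'rV[R]_n) : dot (u + v) c = dot u c + dot v c.
Proof. by rewrite /dot -big_split; apply: eq_bigr => j _; rewrite mxE mulrDl. Qed.
Lemma dotDr n (u c d : 'rV[R]_n) : dot u (c + d) = dot u c + dot u d.
Proof. by rewrite /dot -big_split; apply: eq_bigr => j _; rewrite mxE mulrDr. Qed.
Lemma dotZl n r (u c : 'rV[R]_n) : dot (r *: u) c = r * dot u c.
Proof. by rewrite /dot mulr_sumr; apply: eq_bigr => j _; rewrite mxE mulrA. Qed.
Lemma dotZr n r (u c : 'rV[R]_n) : dot u (r *: c) = r * dot u c.
Proof. by rewrite /dot mulr_sumr; apply: eq_bigr => j _; rewrite mxE mulrCA. Qed.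
Lemma dot0r n (c : 'rV[R]_n) : dot 0 c = 0.
Proof. by rewrite /dot big1 // => j _; rewrite mxE mul0r. Qed.
Lemma dot0 n (u : 'rV[R]_n) : dot u 0 = 0.
Proof. by rewrite /dot big1 // => j _; rewrite mxE mulr0. Qed.
Lemma dotC n (u c : 'rV[R]_n) : dot u c = dot c u.
Proof. by apply: eq_bigr => j _; rewrite mulrC. Qed.
Lemma dotE n (u c : 'rV[R]_n) : dot u c = (u *m c^T) 0 0.
Proof. by rewrite !mxE; apply: eq_bigr => j _; rewrite mxE. Qed.
Lemma dot_delta n j (c : 'rV[R]_n) : dot (delta_mx 0 j) c = c 0 j.
Proof. by rewrite dotE -rowE !mxE. Qed.

Lemma in_dual n (N : {set 'rV[R]_n}) u : (u \in dual_code N) = [forall c in N, dot u c == 0].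
Proof. by rewrite inE. Qed.


Lemma card_dual (chi : R -> algC) n (N : {set 'rV[R]_n}) :
  (forall x y, chi (x + y) = chi x * chi y) -> chi 0 = 1 ->
  (forall y : R, y != 0 -> exists r, chi (r * y) != 1) ->
  linear_code N -> (#|N| * #|dual_code N| = #|{: 'rV[R]_n}|)%N.
Proof.
move=> hom chi0 hgen [N0 ND NZ].
have NN : forall x, x \in N -> - x \in N by move=> x xN; rewrite -scaleN1r NZ.
pose F (x c : 'rV[R]_n) := chi (dot x c).
have S1 : \sum_x \sum_(c in N) F x c = (#|{: 'rV[R]_n}|)%:R.
  rewrite exchange_big (bigD1 (0 : 'rV[R]_n) N0) /= [X in _ + X]big1 ?addr0.
    rewrite /F; under eq_bigr do rewrite dot0 chi0.
    by rewrite -sumr_const; apply: eq_bigl => x.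
  move=> c /andP[cN c0].
  have [j cj] : exists j, c 0 j != 0.
    apply: NNPP => H; case/negP: c0; apply/eqP/matrixP => i j.
    rewrite ord1 mxE; apply: NNPP => H1; apply: H; exists j; exact/eqP.
  have [r hr] := hgen _ cj.
  apply: (@sum_hom0T _ (fun x => F x c) (r *: delta_mx 0 j)).
    by move=> x y; rewrite /F dotDl hom.
  by rewrite /F dotZl dot_delta.
have S2 : \sum_x \sum_(c in N) F x c = (#|N| * #|dual_code N|)%:R.
  rewrite (bigID (fun x => x \in dual_code N)) /= [X in _ + X]big1 ?addr0.
    transitivity (\sum_(x in dual_code N) (#|N|%:R : algC)).
      apply: eq_bigr => x; rewrite in_dual => /forallP xD.
      rewrite -sumr_const; apply: eq_bigr => c cN.
      by rewrite /F; move: (xD c); rewrite cN => /eqP ->.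
    by rewrite sumr_const natrM mulr_natr.
  move=> x; rewrite in_dual => /forallPn [c]; rewrite negb_imply => /andP[cN xc].
  have [r hr] := hgen _ xc.
  apply: (@sum_hom0 _ (fun c => F x c) N (r *: c)) => //.
  - by move=> y z; rewrite /F dotDr hom.
  - by apply: NZ.
  - by rewrite /F dotZr.
by apply/eqP; rewrite -(eqr_nat algC) -S1 -S2.
Qed.


Lemma card_ker m p (B : 'M[R]_(m, p)) (S : {set 'rV[R]_m}) :
  (forall x y, x \in S -> y \in S -> x + y \in S) -> (forall x, x \in S -> - x \in S) ->
  #|S| = (#|[set u *m B | u in S]| * #|[set u in S | u *m B == 0%R]|)%N.
Proof.
move=> addS oppS.
rewrite -sum1_card (partition_big_imset (fun u => u *m B)) /= -sum_nat_const.
apply: eq_bigr => y /imsetP [x0 x0S ->].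
rewrite -sum1_card (reindex_inj (addIr x0)) /=; apply: eq_bigl => u.
rewrite inE mulmxDl -subr_eq0 addrK; congr (_ && _).
apply/idP/idP => h; last by apply: addS.
by have := addS _ _ h (oppS _ x0S); rewrite addrK.
Qed.


Lemma frob_gen (M : {set R}) : local_with_max M -> local_frobenius M ->
  exists a : R, a != 0 /\ forall y, y != 0 -> exists r, r * y = a.
Proof.
move=> [[[M0 MD MZ] Mne Mmax] _] [a [Hsoc Hann]].
have a0 : a != 0.
  apply/negP => /eqP a0; case/negP: Mne; apply/eqP/setP => r; rewrite inE.
  by apply/(Hann r); rewrite a0 mul0r.
have step2 : forall J, is_ideal J -> (forall y, y \in J -> exists r, y = a * r) ->
    J != [set 0] -> a \in J.
  move=> J [J0 JD JZ] sub Jn.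
  pose K := [set r | a * r \in J].
  have Kid : is_ideal K.
    split; rewrite ?inE ?mulr0 //.
      by move=> x y; rewrite !inE mulrDr; apply: JD.
    by move=> r x; rewrite !inE mulrCA; apply: JZ.
  have MK : M \subset K.
    by apply/subsetP => r rM; rewrite inE (proj2 (Hann r) rM).
  case: (Mmax K Kid MK) => [KM | KT].
    have [y yJ y0] : exists2 y, y \in J & y != 0.
      apply: NNPP => H; case/negP: Jn; apply/eqP/setP => z; rewrite inE.
      apply/idP/eqP => [zJ|->//]; apply: NNPP => z0; apply: H; exists z => //; exact/eqP.
    have [r yr] := sub y yJ.
    have : r \in K by rewrite inE -yr.
    by rewrite KM => /Hann; move: y0; rewrite yr => /eqP.
  have : 1 \in K by rewrite KT inE.
  by rewrite inE mulr1.
have step3 : forall I, is_minimal_ideal I -> forall y, y \in I -> exists r, y = a * r.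
  move=> I Imin y yI; apply/Hsoc => J Jid Jall; exact: (subsetP (Jall I Imin) y yI).
have step4 : forall k (I : {set R}), (#|I| <= k)%N -> is_ideal I -> I != [set 0] -> a \in I.
  elim => [|k IH] I.
    move=> cI [I0 _ _] _; rewrite leqn0 cards_eq0 in cI.
    by rewrite (eqP cI) inE in I0.
  move=> cI Iid In; case: (classic (is_minimal_ideal I)) => [Imin | Inm].
    by apply: step2 => //; apply: step3.
  have [J HJ] : exists J, ~ (is_ideal J -> J \subset I -> J = [set 0] \/ J = I).
    by apply: not_all_ex_not => H; apply: Inm; split.
  have Jid : is_ideal J by apply: NNPP => h; apply: HJ => /h.
  have JI : J \subset I by apply: NNPP => h; apply: HJ => _ /h.
  have Jn : J <> [set 0] by move=> e; apply: HJ => _ _; left.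
  have JnI : J <> I by move=> e; apply: HJ => _ _; right.
  have lt : (#|J| < #|I|)%N.
    by apply: proper_card; rewrite properEneq JI andbT; apply/eqP.
  have : a \in J.
    apply: IH => //; last exact/eqP.
    by rewrite -ltnS (leq_trans lt cI).
  exact: (subsetP JI a).
exists a; split => // y y0.
pose I := [set r * y | r : R].
have Iid : is_ideal I.
  split.
  - by apply/imsetP; exists 0 => //; rewrite mul0r.
  - move=> _ _ /imsetP[r _ ->] /imsetP[s _ ->]; apply/imsetP; exists (r + s) => //.
    by rewrite mulrDl.
  - move=> t _ /imsetP[r _ ->]; apply/imsetP; exists (t * r) => //; by rewrite mulrA.
have In : I != [set 0].
  apply/negP => /eqP e.
  have : y \in I by apply/imsetP; exists 1; rewrite ?mul1r.
  by rewrite e inE (negbTE y0).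
have := step4 _ I (leqnn _) Iid In.
by case/imsetP => r _ ->; exists r.
Qed.


Lemma rowspanE k m (A : 'M[R]_(k, m)) : rowspan A = [set u *m A | u in [set: 'rV[R]_k]].
Proof.
by apply/setP => y; apply/imsetP/imsetP => [[u _ ->]|[u _ ->]]; exists u.
Qed.

Lemma rowspan_code k m (A : 'M[R]_(k, m)) : linear_code (rowspan A).
Proof.
split.
- by apply/imsetP; exists 0 => //; rewrite mul0mx.
- move=> _ _ /imsetP[u _ ->] /imsetP[v _ ->]; apply/imsetP; exists (u + v) => //.
  by rewrite mulmxDl.
- move=> r _ /imsetP[u _ ->]; apply/imsetP; exists (r *: u) => //.
  by rewrite scalemxAl.
Qed.

Lemma dual_code_code n (N : {set 'rV[R]_n}) : linear_code (dual_code N).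
Proof.
split; rewrite ?in_dual.
- by apply/forallP => c; rewrite dot0r eqxx implybT.
- move=> x y; rewrite !in_dual => /forallP hx /forallP hy; apply/forallP => c.
  apply/implyP => cN; rewrite dotDl.
  by move: (hx c) (hy c); rewrite cN /= => /eqP -> /eqP ->; rewrite addr0.
- move=> r x; rewrite !in_dual => /forallP hx; apply/forallP => c.
  apply/implyP => cN; rewrite dotZl.
  by move: (hx c); rewrite cN /= => /eqP ->; rewrite mulr0.
Qed.

Lemma dot_mul m p (u : 'rV[R]_m) (B : 'M[R]_(m, p)) v :
  dot u (v *m B^T) = dot (u *m B) v.
Proof. by rewrite !dotE trmx_mul trmxK mulmxA. Qed.

Lemma ker_dual m p (B : 'M[R]_(m, p)) (S : {set 'rV[R]_m}) :
  [set u in S | u *m B == 0%R] = S :&: dual_code (rowspan B^T).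
Proof.
apply/setP => u; rewrite inE in_setI in_dual; congr (_ && _); apply/eqP/forallP.
  move=> h c; apply/implyP => /imsetP[v _ ->].
  by rewrite dot_mul h dot0r.
move=> h; apply/matrixP => i j; rewrite ord1 [RHS]mxE.
have : delta_mx 0 j *m B^T \in rowspan B^T by apply/imsetP; exists (delta_mx 0 j).
move/(implyP (h _)); rewrite dot_mul dotC dot_delta => /eqP //.
Qed.

Lemma linear_closed n (N : {set 'rV[R]_n}) : linear_code N ->
  (forall x y, x \in N -> y \in N -> x + y \in N) /\ (forall x, x \in N -> - x \in N).
Proof. by move=> [_ ND NZ]; split => // x xN; rewrite -scaleN1r NZ. Qed.

End Ring.

Theorem lemma3p9 (R : finComNzRingType) (M : {set R}) (q n : nat)
  (hloc : local_with_max M) (hfrob : local_frobenius M)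
  (hq : q = residue_card M)
  (C1 C2 : {set 'rV[R]_n}) (hC1 : linear_code C1) (hC2 : linear_code C2)
  (k1 k2 l1 l2 : nat)
  (G1 : 'M[R]_(k1, n)) (G2 : 'M[R]_(k2, n))
  (H1 : 'M[R]_(l1, n)) (H2 : 'M[R]_(l2, n))
  (hG1 : generator_matrix G1 C1) (hG2 : generator_matrix G2 C2)
  (hH1 : parity_check_matrix H1 C1) (hH2 : parity_check_matrix H2 C2) :
  dimq q (C1 :&: C2) = Rdefinitions.Rminus (dimq q C1) (Rankq q (H2 *m G1^T)%R)
  \/
  dimq q (C1 :&: C2) = Rdefinitions.Rminus (dimq q C2) (Rankq q (H1 *m G2^T)%R).
Proof.
rewrite /generator_matrix in hG1; rewrite /parity_check_matrix in hH2.
have [a [a0 hgenA]] := frob_gen hloc hfrob.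
have [chi [hom [chi0 chia]]] := exists_char a0.
have hgen : forall y : R, y != 0 -> exists r, chi (r * y) != 1.
  by move=> y y0; have [r ry] := hgenA y y0; exists r; rewrite ry.
have key := card_dual hom chi0 hgen.
have posD : forall m (N : {set 'rV[R]_m}), (0 < #|dual_code N|)%N.
  by move=> m N; apply/card_gt0P; exists 0; case: (dual_code_code N).
have dd : forall m (N : {set 'rV[R]_m}), linear_code N -> dual_code (dual_code N) = N.
  move=> m N hN; apply/eqP; rewrite eq_sym eqEcard; apply/andP; split.
    apply/subsetP => c cN; rewrite in_dual; apply/forallP => u; apply/implyP.
    by rewrite in_dual => /forallP/(_ c); rewrite cN /= dotC.
  have k1' := key _ _ hN; have k2' := key _ _ (dual_code_code N).
  by rewrite -(leq_pmul2l (posD _ N)) k2' -k1' mulnC.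
set A := H2 *m G1^T.
have e1 : #|rowspan A| = #|rowspan A^T|.
  have := @card_ker R _ _ A [set: 'rV[R]_l2] (fun _ _ _ _ => in_setT _) (fun _ _ => in_setT _).
  rewrite -rowspanE ker_dual setTI cardsT -(key _ _ (rowspan_code A^T)) => /eqP.
  by rewrite eqn_pmul2r ?posD // => /eqP.
have e2 : #|C1| = (#|rowspan A^T| * #|C1 :&: C2|)%N.
  have [c1D c1N] := linear_closed hC1.
  have -> : rowspan A^T = [set u *m H2^T | u in C1].
    rewrite /A trmx_mul trmxK -hG1; apply/setP => y; apply/imsetP/imsetP.
      move=> [u _ ->]; exists (u *m G1); first by apply/imsetP; exists u.
      by rewrite mulmxA.
    by move=> [c /imsetP[u _ ->] ->]; exists u => //; rewrite mulmxA.
  by rewrite (card_ker H2^T c1D c1N) ker_dual trmxK hH2 dd.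
left; rewrite /dimq /Rankq; apply: real_part.
- apply/ltP/card_gt0P; exists 0; rewrite inE.
  by case: hC1 => -> _ _; case: hC2 => -> _ _.
- by apply/ltP/card_gt0P; exists 0; case: (rowspan_code A).
- by rewrite e2 e1.
Qed.
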